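(* Let $X$ be a set and let $\mathcal{L}\subset\mathcal{P}(X)$ be a nest (for every $M,N\in\mathcal{L}$, either $M\subset N$ or $N\subset M$). Suppose that for each $L\in\mathcal{L}$ there exists $\sup L$ with respect to $\trianglelefteq_{\mathcal{L}}$ and $\sup L\in X-L$. Then: 1. $L=X-\uparrow{k}$, where $k=\sup L$ with respect to $\triangleleft_{\mathcal{L}}$, for each $L\in\mathcal{L}$. 2. $\mathcal{T}_{\mathcal{L}}\subset\mathcal{T}_l$.
   Context: For a nest $\mathcal{L}$ on $X$, $x\triangleleft_{\mathcal{L}} y$ iff there exists $L\in\mathcal{L}$ with $x\in L$ and $y\notin L$; $\trianglelefteq_{\mathcal{L}}$ is its reflexive version. For $k\in X$, $\uparrow{k}$ is the set of $y\in X$ with $k\trianglelefteq_{\mathcal{L}} y$. $\mathcal{T}_{\mathcal{L}}$ is the topology on $X$ generated by $\mathcal{L}$ (as a subbase), and $\mathcal{T}_l$ is the lower topology on $X$, generated by the subbase $\{X-\uparrow{k}: k\in X\}$. *)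

(* Defs.v *)
From mathcomp Require Import all_boot.
From mathcomp Require Export boolp classical_sets.
Set Implicit Arguments. Unset Strict Implicit. Unset Printing Implicit Defensive.
Local Open Scope classical_set_scope.

Definition nest (T : Type) (L : set (set T)) : Prop :=
  forall M N, L M -> L N -> M `<=` N \/ N `<=` M.

Definition nest_lt (T : Type) (L : set (set T)) (x y : T) : Prop :=
  exists2 M, L M & M x /\ ~ M y.

Definition nest_le (T : Type) (L : set (set T)) (x y : T) : Prop :=
  x = y \/ nest_lt L x y.

Definition upset (T : Type) (L : set (set T)) (k : T) : set T :=
  [set y | nest_le L k y].

Definition is_sup (T : Type) (le : T -> T -> Prop) (A : set T) (k : T) : Prop :=
  (forall x, A x -> le x k) /\
  (forall u, (forall x, A x -> le x u) -> le k u).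

Definition is_topology (T : Type) (tau : set (set T)) : Prop :=
  tau setT /\
  (forall U V, tau U -> tau V -> tau (U `&` V)) /\
  (forall F : set (set T), F `<=` tau -> tau (\bigcup_(U in F) U)).

Definition generated_topology (T : Type) (S : set (set T)) : set (set T) :=
  [set U | forall tau, is_topology tau -> S `<=` tau -> tau U].

Definition lower_topology (T : Type) (L : set (set T)) : set (set T) :=
  generated_topology [set ~` upset L k | k in [set: T]].

(* Main.v *)
Require Import Defs.
From mathcomp Require Import all_boot boolp classical_sets.
Local Open Scope classical_set_scope.

Lemma nest_lt_asym (T : Type) (L : set (set T)) x y :
  nest L -> nest_lt L x y -> nest_lt L y x -> False.
Proof.
move=> hn [M LM [Mx nMy]] [N LN [Ny nNx]].
case: (hn M N LM LN) => sub.
- by apply: nNx; apply: sub.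
- by apply: nMy; apply: sub.
Qed.
Arguments nest_lt_asym {T L x y}.

Theorem proposition3p4 (T : Type) (L : set (set T)) :
  nest L ->
  (forall M, L M -> exists k, is_sup (nest_le L) M k /\ ~ M k) ->
  (forall M, L M -> forall k, is_sup (nest_le L) M k -> M = ~` upset L k) /\
  generated_topology L `<=` lower_topology L.
Proof.
move=> hn hs.
have P1 : forall M, L M -> forall k, is_sup (nest_le L) M k -> M = ~` upset L k.
  move=> M LM k [ub lst].
  have nMk : ~ M k.
    move=> Mk.
    have [k0 [[ub0 lst0] nMk0]] := hs M LM.
    have h1 := ub0 k Mk.
    have h2 := lst0 k ub.
    case: h1 => [e|lt1]; first by subst k0.
    case: h2 => [e|lt2]; first by subst k0.
    exact: (nest_lt_asym hn lt1 lt2).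
  apply/seteqP; split => x /=.
  - move=> Mx; rewrite /upset /= => -[e|lt1]; first by subst x.
    case: (ub x Mx) => [e|lt2]; first by subst x.
    exact: (nest_lt_asym hn lt1 lt2).
  - move=> nup; apply: contrapT => nMx; apply: nup.
    apply: lst => y My; right; exists M => //.
split => // U gU tau htau sub.
apply: gU => // M LM.
have [k [hk _]] := hs M LM.
rewrite (P1 M LM k hk).
apply: sub; exists k => //.
Qed.
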